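(* Consider the closed-loop lumped-parameter (0D) circulation model described in the context and suppose $p_{\mathrm{EX}}$ is constant in time. Let the state functions be differentiable solutions of the system (i)–(iii) of the context on $[0,T]$ that are periodic, in the sense that the state vector $\mathbf{c}_1=(V_{\mathrm{LA}},V_{\mathrm{LV}},V_{\mathrm{RA}},V_{\mathrm{RV}},p_{\mathrm{AR}}^{\mathrm{SYS}},p_{\mathrm{VEN}}^{\mathrm{SYS}},p_{\mathrm{AR}}^{\mathrm{PUL}},p_{\mathrm{VEN}}^{\mathrm{PUL}},Q_{\mathrm{AR}}^{\mathrm{SYS}},Q_{\mathrm{VEN}}^{\mathrm{SYS}},Q_{\mathrm{AR}}^{\mathrm{PUL}},Q_{\mathrm{VEN}}^{\mathrm{PUL}})$ satisfies $\mathbf{c}_1(0)=\mathbf{c}_1(T)$. Then $W^{\mathrm{act}}+W^{\mathrm{diss}}=0$, where $W^{\mathrm{act}}=\int_0^T\Pi^{\mathrm{act}}(t)\,dt$ and $W^{\mathrm{diss}}=\int_0^T\Pi^{\mathrm{diss}}(t)\,dt$.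
   Context: Chamber indices $i\in\{\mathrm{LA},\mathrm{LV},\mathrm{RA},\mathrm{RV}\}$; vascular indices $j\in\{\mathrm{AR},\mathrm{VEN}\}$, $k\in\{\mathrm{SYS},\mathrm{PUL}\}$. Positive constants $C_j^k,R_j^k,L_j^k$, constants $V_{0,i}$ and $E_i^{\mathrm{pass}}>0$, given functions $E_i^{\mathrm{act}}(t)$, and the external pressure $p_{\mathrm{EX}}$; for each valve $v\in\{\mathrm{MV},\mathrm{AV},\mathrm{TV},\mathrm{PV}\}$ a resistance $R_v(p_1,p_2)=R_{\min}$ if $p_1<p_2$ and $R_{\max}$ if $p_1\ge p_2$, with $0<R_{\min}$, $R_{\max}<\infty$. Set $E_i(t)=E_i^{\mathrm{pass}}+E_i^{\mathrm{act}}(t)$. (i) $p_i=p_{\mathrm{EX}}+E_i(V_i-V_{0,i})$ for each chamber; $Q_{\mathrm{MV}}=\frac{p_{\mathrm{LA}}-p_{\mathrm{LV}}}{R_{\mathrm{MV}}(p_{\mathrm{LA}},p_{\mathrm{LV}})}$, $Q_{\mathrm{AV}}=\frac{p_{\mathrm{LV}}-p_{\mathrm{AR}}^{\mathrm{SYS}}}{R_{\mathrm{AV}}(p_{\mathrm{LV}},p_{\mathrm{AR}}^{\mathrm{SYS}})}$, $Q_{\mathrm{TV}}=\frac{p_{\mathrm{RA}}-p_{\mathrm{RV}}}{R_{\mathrm{TV}}(p_{\mathrm{RA}},p_{\mathrm{RV}})}$, $Q_{\mathrm{PV}}=\frac{p_{\mathrm{RV}}-p_{\mathrm{AR}}^{\mathrm{PUL}}}{R_{\mathrm{PV}}(p_{\mathrm{RV}},p_{\mathrm{AR}}^{\mathrm{PUL}})}$.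 (ii) $\dot V_{\mathrm{LA}}=Q_{\mathrm{VEN}}^{\mathrm{PUL}}-Q_{\mathrm{MV}}$, $\dot V_{\mathrm{LV}}=Q_{\mathrm{MV}}-Q_{\mathrm{AV}}$, $\dot V_{\mathrm{RA}}=Q_{\mathrm{VEN}}^{\mathrm{SYS}}-Q_{\mathrm{TV}}$, $\dot V_{\mathrm{RV}}=Q_{\mathrm{TV}}-Q_{\mathrm{PV}}$; $C_{\mathrm{AR}}^{\mathrm{SYS}}\dot p_{\mathrm{AR}}^{\mathrm{SYS}}=Q_{\mathrm{AV}}-Q_{\mathrm{AR}}^{\mathrm{SYS}}$, $C_{\mathrm{VEN}}^{\mathrm{SYS}}\dot p_{\mathrm{VEN}}^{\mathrm{SYS}}=Q_{\mathrm{AR}}^{\mathrm{SYS}}-Q_{\mathrm{VEN}}^{\mathrm{SYS}}$, $C_{\mathrm{AR}}^{\mathrm{PUL}}\dot p_{\mathrm{AR}}^{\mathrm{PUL}}=Q_{\mathrm{PV}}-Q_{\mathrm{AR}}^{\mathrm{PUL}}$, $C_{\mathrm{VEN}}^{\mathrm{PUL}}\dot p_{\mathrm{VEN}}^{\mathrm{PUL}}=Q_{\mathrm{AR}}^{\mathrm{PUL}}-Q_{\mathrm{VEN}}^{\mathrm{PUL}}$. (iii) $\frac{L_{\mathrm{AR}}^{\mathrm{SYS}}}{R_{\mathrm{AR}}^{\mathrm{SYS}}}\dot Q_{\mathrm{AR}}^{\mathrm{SYS}}=-Q_{\mathrm{AR}}^{\mathrm{SYS}}-\frac{p_{\mathrm{VEN}}^{\mathrm{SYS}}-p_{\mathrm{AR}}^{\mathrm{SYS}}}{R_{\mathrm{AR}}^{\mathrm{SYS}}}$,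 $\frac{L_{\mathrm{VEN}}^{\mathrm{SYS}}}{R_{\mathrm{VEN}}^{\mathrm{SYS}}}\dot Q_{\mathrm{VEN}}^{\mathrm{SYS}}=-Q_{\mathrm{VEN}}^{\mathrm{SYS}}-\frac{p_{\mathrm{RA}}-p_{\mathrm{VEN}}^{\mathrm{SYS}}}{R_{\mathrm{VEN}}^{\mathrm{SYS}}}$, $\frac{L_{\mathrm{AR}}^{\mathrm{PUL}}}{R_{\mathrm{AR}}^{\mathrm{PUL}}}\dot Q_{\mathrm{AR}}^{\mathrm{PUL}}=-Q_{\mathrm{AR}}^{\mathrm{PUL}}-\frac{p_{\mathrm{VEN}}^{\mathrm{PUL}}-p_{\mathrm{AR}}^{\mathrm{PUL}}}{R_{\mathrm{AR}}^{\mathrm{PUL}}}$, $\frac{L_{\mathrm{VEN}}^{\mathrm{PUL}}}{R_{\mathrm{VEN}}^{\mathrm{PUL}}}\dot Q_{\mathrm{VEN}}^{\mathrm{PUL}}=-Q_{\mathrm{VEN}}^{\mathrm{PUL}}-\frac{p_{\mathrm{LA}}-p_{\mathrm{VEN}}^{\mathrm{PUL}}}{R_{\mathrm{VEN}}^{\mathrm{PUL}}}$. Powers: $\Pi^{\mathrm{act}}=\sum_i -E_i^{\mathrm{act}}(V_i-V_{0,i})\dot V_i$; $\Pi^{\mathrm{diss}}=\Pi_{\mathrm{MV}}+\Pi_{\mathrm{AV}}+\Pi_{\mathrm{TV}}+\Pi_{\mathrm{PV}}+\sum_{j,k}\Pi_j^k$ with $\Pi_j^k=-R_j^k(Q_j^k)^2$,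 $\Pi_{\mathrm{MV}}=-\frac{(p_{\mathrm{LA}}-p_{\mathrm{LV}})^2}{R_{\mathrm{MV}}(p_{\mathrm{LA}},p_{\mathrm{LV}})}$, $\Pi_{\mathrm{AV}}=-\frac{(p_{\mathrm{LV}}-p_{\mathrm{AR}}^{\mathrm{SYS}})^2}{R_{\mathrm{AV}}(p_{\mathrm{LV}},p_{\mathrm{AR}}^{\mathrm{SYS}})}$, $\Pi_{\mathrm{TV}}=-\frac{(p_{\mathrm{RA}}-p_{\mathrm{RV}})^2}{R_{\mathrm{TV}}(p_{\mathrm{RA}},p_{\mathrm{RV}})}$, $\Pi_{\mathrm{PV}}=-\frac{(p_{\mathrm{RV}}-p_{\mathrm{AR}}^{\mathrm{PUL}})^2}{R_{\mathrm{PV}}(p_{\mathrm{RV}},p_{\mathrm{AR}}^{\mathrm{PUL}})}$. *)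

(* Defs.v *)
From Stdlib Require Import Reals.
From Coquelicot Require Import Coquelicot.
Open Scope R_scope.

Definition valveR (Rmin Rmax p1 p2 : R) : R :=
  if Rlt_dec p1 p2 then Rmin else Rmax.

Definition valveQ (Rmin Rmax p1 p2 : R) : R :=
  (p1 - p2) / valveR Rmin Rmax p1 p2.

Definition valvePi (Rmin Rmax p1 p2 : R) : R :=
  - ((p1 - p2) ^ 2) / valveR Rmin Rmax p1 p2.

Definition chamberP (pEX Epass : R) (Eact : R -> R) (V0 : R) (V : R -> R) (t : R) : R :=
  pEX + (Epass + Eact t) * (V t - V0).

Definition cont_in_0T (T : R) (f : R -> R) (t : R) : Prop :=
  filterlim f (within (fun u => 0 <= u <= T) (locally t)) (locally (f t)).

(* Main.v *)
Require Import Defs.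
From Stdlib Require Import Reals Lra.
From Coquelicot Require Import Coquelicot.
Open Scope R_scope.

Open Scope R_scope.


Definition clampT (T t : R) : R := Rmax 0 (Rmin T t).

Lemma clampT_in T t : 0 <= T -> 0 <= clampT T t <= T.
Proof. intros. unfold clampT, Rmax, Rmin; repeat destruct Rle_dec; lra. Qed.

Lemma clampT_id T t : 0 <= t <= T -> clampT T t = t.
Proof. intros. unfold clampT, Rmax, Rmin; repeat destruct Rle_dec; lra. Qed.

Lemma clampT_lip T x y : 0 <= T -> Rabs (clampT T y - clampT T x) <= Rabs (y - x).
Proof. intros. unfold clampT, Rmax, Rmin; repeat destruct Rle_dec;
  unfold Rabs; repeat destruct Rcase_abs; lra. Qed.

Lemma cont_clamp T (f : R -> R) : 0 <= T ->
  (forall t, 0 <= t <= T -> cont_in_0T T f t) ->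
  forall x, continuous (fun y => f (clampT T y)) x.
Proof.
  intros HT Hf x. unfold continuous.
  apply (filterlim_comp _ _ _ (clampT T) f _ (within (fun u => 0 <= u <= T) (locally (clampT T x)))).
  - intros P [eps HP]. exists eps. intros y Hy. apply HP.
    + change (Rabs (clampT T y - clampT T x) < eps).
      change (Rabs (y - x) < eps) in Hy.
      pose proof (clampT_lip T x y HT). lra.
    + apply clampT_in; auto.
  - apply Hf. apply clampT_in; auto.
Qed.

Lemma cont_ext (f g : R -> R) x : (forall y : R, f y = g y) -> continuous f x -> continuous g x.
Proof. intros. exact (continuous_ext f g x H H0). Qed.
Lemma cont_plus (f g : R -> R) x : continuous f x -> continuous g x ->
  continuous (fun y => f y + g y) x.
Proof. intros. exact (continuous_plus f g x H H0). Qed.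
Lemma cont_mult (f g : R -> R) x : continuous f x -> continuous g x ->
  continuous (fun y => f y * g y) x.
Proof. intros. exact (continuous_mult f g x H H0). Qed.
Lemma cont_opp (f : R -> R) x : continuous f x -> continuous (fun y => - f y) x.
Proof. intros. exact (continuous_opp f x H). Qed.
Lemma cont_minus (f g : R -> R) x : continuous f x -> continuous g x ->
  continuous (fun y => f y - g y) x.
Proof. intros. apply cont_plus; auto. apply cont_opp; auto. Qed.
Lemma cont_pow2 (f : R -> R) x : continuous f x -> continuous (fun y => f y ^ 2) x.
Proof. intros. apply (cont_ext (fun y => f y * f y)).
  intros; ring. apply cont_mult; auto. Qed.
Lemma cont_const (c x : R) : continuous (fun _ : R => c) x.
Proof. apply continuous_const. Qed.

Lemma cont_min0 (f : R -> R) x : continuous f x -> continuous (fun y => Rmin (f y) 0) x.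
Proof. intros. apply (cont_ext (fun y => (f y - Rabs (f y)) * / 2)).
  intros y. unfold Rmin, Rabs; destruct Rle_dec; destruct Rcase_abs; lra.
  apply cont_mult. apply cont_minus; auto. apply continuous_Rabs_comp; auto.
  apply cont_const. Qed.

Lemma valveQ_eq rmin rmax a b : 0 < rmin -> 0 < rmax ->
  valveQ rmin rmax a b = (a - b) * / rmax + Rmin (a - b) 0 * (/ rmin - / rmax).
Proof. intros. unfold valveQ, valveR, Rmin. destruct Rlt_dec, Rle_dec; try (field; lra); assert (Hz : a - b = 0) by lra; rewrite Hz; field; lra. Qed.

Lemma valvePi_eq rmin rmax a b : 0 < rmin -> 0 < rmax ->
  valvePi rmin rmax a b = - ((a - b) ^ 2) * / rmax - (Rmin (a - b) 0) ^ 2 * (/ rmin - / rmax).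
Proof. intros. unfold valvePi, valveR, Rmin. destruct Rlt_dec, Rle_dec; try (field; lra); assert (Hz : a - b = 0) by lra; rewrite Hz; field; lra. Qed.

Lemma valve_prod rmin rmax a b : 0 < rmin -> 0 < rmax ->
  valveQ rmin rmax a b * (a - b) = - valvePi rmin rmax a b.
Proof. intros. unfold valvePi, valveQ, valveR. destruct Rlt_dec; field; lra. Qed.

Lemma cont_valveQ rmin rmax (f g : R -> R) x : 0 < rmin -> 0 < rmax ->
  continuous f x -> continuous g x -> continuous (fun y => valveQ rmin rmax (f y) (g y)) x.
Proof. intros. apply (cont_ext (fun y => (f y - g y) * / rmax + Rmin (f y - g y) 0 * (/ rmin - / rmax))).
  intros; rewrite valveQ_eq; auto.
  apply cont_plus; apply cont_mult; try apply cont_const; try apply cont_minus; auto.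
  apply cont_min0; apply cont_minus; auto. Qed.

Lemma cont_valvePi rmin rmax (f g : R -> R) x : 0 < rmin -> 0 < rmax ->
  continuous f x -> continuous g x -> continuous (fun y => valvePi rmin rmax (f y) (g y)) x.
Proof. intros. apply (cont_ext (fun y => - ((f y - g y) ^ 2) * / rmax - (Rmin (f y - g y) 0) ^ 2 * (/ rmin - / rmax))).
  intros; rewrite valvePi_eq; auto.
  apply cont_minus; apply cont_mult; try apply cont_const; try apply cont_opp; apply cont_pow2;
  try apply cont_minus; auto.
  apply cont_min0; apply cont_minus; auto. Qed.

Lemma is_derive_eq (f : R -> R) (x l l' : R) : is_derive f x l -> l = l' -> is_derive f x l'.
Proof. intros; subst; auto. Qed.
Lemma D_plus (f g : R -> R) x a b : is_derive f x a -> is_derive g x b ->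
  is_derive (fun y => f y + g y) x (a + b).
Proof. intros. exact (is_derive_plus f g x a b H H0). Qed.
Lemma D_sq (f : R -> R) x df k c : is_derive f x df ->
  is_derive (fun y => k * ((f y - c) * (f y - c))) x (k * (2 * (f x - c) * df)).
Proof. intros. apply is_derive_scal.
  assert (Hm : is_derive (fun y => f y - c) x df).
  { pose proof (is_derive_minus f (fun _ => c) x df zero H (is_derive_const c x)) as Hm0.
    apply (is_derive_eq _ _ (minus df zero)). exact Hm0.
    unfold minus, zero, plus, opp; simpl. ring. }
  pose proof (is_derive_mult (fun y => f y - c) (fun y => f y - c) x df df Hm Hm Rmult_comm) as Hmm.
  eapply is_derive_eq. exact Hmm. unfold plus, mult; simpl. ring. Qed.
Lemma D_lin (f : R -> R) x df k : is_derive f x df -> is_derive (fun y => k * f y) x (k * df).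
Proof. apply is_derive_scal. Qed.

Lemma mm0T T x : 0 < T -> Rmin 0 T < x < Rmax 0 T -> 0 < x < T.
Proof. intros. unfold Rmin, Rmax in *; destruct Rle_dec; lra. Qed.
Lemma mm0T' T x : 0 < T -> Rmin 0 T <= x <= Rmax 0 T -> 0 <= x <= T.
Proof. intros. unfold Rmin, Rmax in *; destruct Rle_dec; lra. Qed.

Lemma locally_clamp T t : 0 < t < T -> locally t (fun u => clampT T u = u).
Proof. intros. assert (He : 0 < Rmin t (T - t)) by (unfold Rmin; destruct Rle_dec; lra).
  exists (mkposreal _ He). intros y Hy. change (Rabs (y - t) < Rmin t (T - t)) in Hy.
  apply clampT_id. revert Hy. unfold Rmin, Rabs; destruct Rle_dec; destruct Rcase_abs; intros; lra. Qed.

Lemma energy_identity (pEX Ep1 Ep2 Ep3 Ep4 Ea1 Ea2 Ea3 Ea4 V01 V02 V03 V04 V1 V2 V3 V4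
  dV1 dV2 dV3 dV4 P1 P2 P3 P4 pAS pVS pAP pVP dpAS dpVS dpAP dpVP QAS QVS QAP QVP
  dQAS dQVS dQAP dQVP CAS CVS CAP CVP RAS RVS RAP RVP LAS LVS LAP LVP
  qMV qAV qTV qPV piMV piAV piTV piPV : R) :
  P1 = pEX + (Ep1 + Ea1) * (V1 - V01) ->
  P2 = pEX + (Ep2 + Ea2) * (V2 - V02) ->
  P3 = pEX + (Ep3 + Ea3) * (V3 - V03) ->
  P4 = pEX + (Ep4 + Ea4) * (V4 - V04) ->
  dV1 = QVP - qMV -> dV2 = qMV - qAV -> dV3 = QVS - qTV -> dV4 = qTV - qPV ->
  CAS * dpAS = qAV - QAS -> CVS * dpVS = QAS - QVS ->
  CAP * dpAP = qPV - QAP -> CVP * dpVP = QAP - QVP ->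
  LAS * dQAS = - RAS * QAS - (pVS - pAS) ->
  LVS * dQVS = - RVS * QVS - (P3 - pVS) ->
  LAP * dQAP = - RAP * QAP - (pVP - pAP) ->
  LVP * dQVP = - RVP * QVP - (P1 - pVP) ->
  qMV * (P1 - P2) = - piMV -> qAV * (P2 - pAS) = - piAV ->
  qTV * (P3 - P4) = - piTV -> qPV * (P4 - pAP) = - piPV ->
  Ep1 * (V1 - V01) * dV1 + Ep2 * (V2 - V02) * dV2 + Ep3 * (V3 - V03) * dV3 + Ep4 * (V4 - V04) * dV4
  + pEX * (dV1 + dV2 + dV3 + dV4)
  + pAS * (CAS * dpAS) + pVS * (CVS * dpVS) + pAP * (CAP * dpAP) + pVP * (CVP * dpVP)
  + QAS * (LAS * dQAS) + QVS * (LVS * dQVS) + QAP * (LAP * dQAP) + QVP * (LVP * dQVP)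
  = (- Ea1 * (V1 - V01) * dV1 + - Ea2 * (V2 - V02) * dV2 + - Ea3 * (V3 - V03) * dV3
     + - Ea4 * (V4 - V04) * dV4)
  + (piMV + piAV + piTV + piPV + (- RAS * QAS ^ 2) + (- RVS * QVS ^ 2)
     + (- RAP * QAP ^ 2) + (- RVP * QVP ^ 2)).
Proof.
  intros h1 h2 h3 h4 d1 d2 d3 d4 c1 c2 c3 c4 l1 l2 l3 l4 v1 v2 v3 v4.
  rewrite c1, c2, c3, c4, l1, l2, l3, l4.
  assert (e1 : Ep1 * (V1 - V01) = P1 - pEX - Ea1 * (V1 - V01)) by (rewrite h1; ring).
  assert (e2 : Ep2 * (V2 - V02) = P2 - pEX - Ea2 * (V2 - V02)) by (rewrite h2; ring).
  assert (e3 : Ep3 * (V3 - V03) = P3 - pEX - Ea3 * (V3 - V03)) by (rewrite h3; ring).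
  assert (e4 : Ep4 * (V4 - V04) = P4 - pEX - Ea4 * (V4 - V04)) by (rewrite h4; ring).
  rewrite e1, e2, e3, e4. rewrite d1, d2, d3, d4.
  assert (v1' : qMV * P1 - qMV * P2 = - piMV) by (rewrite <- v1; ring).
  assert (v2' : qAV * P2 - qAV * pAS = - piAV) by (rewrite <- v2; ring).
  assert (v3' : qTV * P3 - qTV * P4 = - piTV) by (rewrite <- v3; ring).
  assert (v4' : qPV * P4 - qPV * pAP = - piPV) by (rewrite <- v4; ring).
  clear -v1' v2' v3' v4'. lra.
Qed.

Lemma exR (f : R -> R) a b : (forall z, continuous f z) -> ex_RInt f a b.
Proof. intros. apply (ex_RInt_continuous (V:=R_CompleteNormedModule)). intros; auto. Qed.
Lemma RInt_correctR (f : R -> R) a b : ex_RInt f a b -> is_RInt f a b (RInt f a b).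
Proof. apply (RInt_correct (V:=R_CompleteNormedModule)). Qed.
Lemma is_RInt_uniqueR (f : R -> R) a b l : is_RInt f a b l -> RInt f a b = l.
Proof. apply (is_RInt_unique (V:=R_CompleteNormedModule)). Qed.
Lemma RInt_pointR (f : R -> R) a : RInt f a a = 0.
Proof. apply (RInt_point (V:=R_CompleteNormedModule)). Qed.
Lemma ind_eq L R0 dQ Q X : 0 < R0 -> L / R0 * dQ = - Q - X / R0 -> L * dQ = - R0 * Q - X.
Proof. intros H H0. assert (E : L * dQ = R0 * (L / R0 * dQ)) by (field; lra). rewrite E, H0. field; lra. Qed.
Lemma D_minus (f g : R -> R) x a b : is_derive f x a -> is_derive g x b ->
  is_derive (fun y => f y - g y) x (a - b).
Proof. intros. exact (is_derive_minus f g x a b H H0). Qed.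

Theorem proposition2
  (* vascular parameters: C, R, L for AR/VEN x SYS/PUL *)
  (CARS CVENS CARP CVENP RARS RVENS RARP RVENP LARS LVENS LARP LVENP : R)
  (* chamber parameters, for LA, LV, RA, RV *)
  (V0LA V0LV V0RA V0RV EpLA EpLV EpRA EpRV : R)
  (EaLA EaLV EaRA EaRV : R -> R)
  (* constant external pressure, valve resistances, period *)
  (pEX Rmin Rmax T : R)
  (* state functions *)
  (VLA VLV VRA VRV pARS pVENS pARP pVENP QARS QVENS QARP QVENP : R -> R)
  (* their time derivatives *)
  (dVLA dVLV dVRA dVRV dpARS dpVENS dpARP dpVENP dQARS dQVENS dQARP dQVENP : R -> R)
  (* positivity of constants *)
  (HC : 0 < CARS /\ 0 < CVENS /\ 0 < CARP /\ 0 < CVENP)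
  (HR : 0 < RARS /\ 0 < RVENS /\ 0 < RARP /\ 0 < RVENP)
  (HL : 0 < LARS /\ 0 < LVENS /\ 0 < LARP /\ 0 < LVENP)
  (HEp : 0 < EpLA /\ 0 < EpLV /\ 0 < EpRA /\ 0 < EpRV)
  (HRv : 0 < Rmin /\ 0 < Rmax)
  (HT : 0 < T)
  (* the given activation functions are continuous on [0,T] *)
  (HEa : forall t, 0 <= t <= T ->
     cont_in_0T T EaLA t /\ cont_in_0T T EaLV t /\ cont_in_0T T EaRA t /\ cont_in_0T T EaRV t)
  (* the states are continuous on [0,T] ... *)
  (Hcont : forall t, 0 <= t <= T ->
     cont_in_0T T VLA t /\ cont_in_0T T VLV t /\ cont_in_0T T VRA t /\ cont_in_0T T VRV t /\
     cont_in_0T T pARS t /\ cont_in_0T T pVENS t /\ cont_in_0T T pARP t /\ cont_in_0T T pVENP t /\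
     cont_in_0T T QARS t /\ cont_in_0T T QVENS t /\ cont_in_0T T QARP t /\ cont_in_0T T QVENP t)
  (* ... and differentiable in (0,T) with the given derivatives *)
  (Hder : forall t, 0 < t < T ->
     is_derive VLA t (dVLA t) /\ is_derive VLV t (dVLV t) /\
     is_derive VRA t (dVRA t) /\ is_derive VRV t (dVRV t) /\
     is_derive pARS t (dpARS t) /\ is_derive pVENS t (dpVENS t) /\
     is_derive pARP t (dpARP t) /\ is_derive pVENP t (dpVENP t) /\
     is_derive QARS t (dQARS t) /\ is_derive QVENS t (dQVENS t) /\
     is_derive QARP t (dQARP t) /\ is_derive QVENP t (dQVENP t))
  (* the system (i)-(iii) holds on [0,T] *)
  (Hsys : forall t, 0 <= t <= T ->
     let pLA := chamberP pEX EpLA EaLA V0LA VLA t in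
     let pLV := chamberP pEX EpLV EaLV V0LV VLV t in
     let pRA := chamberP pEX EpRA EaRA V0RA VRA t in
     let pRV := chamberP pEX EpRV EaRV V0RV VRV t in
     let QMV := valveQ Rmin Rmax pLA pLV in
     let QAV := valveQ Rmin Rmax pLV (pARS t) in
     let QTV := valveQ Rmin Rmax pRA pRV in
     let QPV := valveQ Rmin Rmax pRV (pARP t) in
     dVLA t = QVENP t - QMV /\
     dVLV t = QMV - QAV /\
     dVRA t = QVENS t - QTV /\
     dVRV t = QTV - QPV /\
     CARS * dpARS t = QAV - QARS t /\
     CVENS * dpVENS t = QARS t - QVENS t /\
     CARP * dpARP t = QPV - QARP t /\
     CVENP * dpVENP t = QARP t - QVENP t /\
     LARS / RARS * dQARS t = - QARS t - (pVENS t - pARS t) / RARS /\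
     LVENS / RVENS * dQVENS t = - QVENS t - (pRA - pVENS t) / RVENS /\
     LARP / RARP * dQARP t = - QARP t - (pVENP t - pARP t) / RARP /\
     LVENP / RVENP * dQVENP t = - QVENP t - (pLA - pVENP t) / RVENP)
  (* periodicity c1(0) = c1(T) *)
  (Hper : VLA 0 = VLA T /\ VLV 0 = VLV T /\ VRA 0 = VRA T /\ VRV 0 = VRV T /\
          pARS 0 = pARS T /\ pVENS 0 = pVENS T /\ pARP 0 = pARP T /\ pVENP 0 = pVENP T /\
          QARS 0 = QARS T /\ QVENS 0 = QVENS T /\ QARP 0 = QARP T /\ QVENP 0 = QVENP T) :
  let Piact := fun t =>
       - (EaLA t) * (VLA t - V0LA) * dVLA t
     + - (EaLV t) * (VLV t - V0LV) * dVLV t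
     + - (EaRA t) * (VRA t - V0RA) * dVRA t
     + - (EaRV t) * (VRV t - V0RV) * dVRV t in
  let Pidiss := fun t =>
     let pLA := chamberP pEX EpLA EaLA V0LA VLA t in
     let pLV := chamberP pEX EpLV EaLV V0LV VLV t in
     let pRA := chamberP pEX EpRA EaRA V0RA VRA t in
     let pRV := chamberP pEX EpRV EaRV V0RV VRV t in
       valvePi Rmin Rmax pLA pLV + valvePi Rmin Rmax pLV (pARS t)
     + valvePi Rmin Rmax pRA pRV + valvePi Rmin Rmax pRV (pARP t)
     + (- RARS * (QARS t) ^ 2) + (- RVENS * (QVENS t) ^ 2)
     + (- RARP * (QARP t) ^ 2) + (- RVENP * (QVENP t) ^ 2) in
  exists Wact Wdiss : R,
    is_RInt Piact 0 T Wact /\ is_RInt Pidiss 0 T Wdiss /\ Wact + Wdiss = 0.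
Proof.
  intros Piact Pidiss.
  destruct HR as (HR1 & HR2 & HR3 & HR4).
  destruct HRv as (HRmin & HRmax).
  assert (HT0 : 0 <= T) by lra.
  Ltac getc Hc := intros t Ht; destruct (Hc t Ht) as (?&?&?&?&?&?&?&?&?&?&?&?); assumption.
  Ltac getc4 Hc := intros t Ht; destruct (Hc t Ht) as (?&?&?&?); assumption.
  assert (cVLA : forall x, continuous (fun y => VLA (clampT T y)) x) by (apply cont_clamp; [lra | getc Hcont]).
  assert (cVLV : forall x, continuous (fun y => VLV (clampT T y)) x) by (apply cont_clamp; [lra | getc Hcont]).
  assert (cVRA : forall x, continuous (fun y => VRA (clampT T y)) x) by (apply cont_clamp; [lra | getc Hcont]).
  assert (cVRV : forall x, continuous (fun y => VRV (clampT T y)) x) by (apply cont_clamp; [lra | getc Hcont]).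
  assert (cpARS : forall x, continuous (fun y => pARS (clampT T y)) x) by (apply cont_clamp; [lra | getc Hcont]).
  assert (cpVENS : forall x, continuous (fun y => pVENS (clampT T y)) x) by (apply cont_clamp; [lra | getc Hcont]).
  assert (cpARP : forall x, continuous (fun y => pARP (clampT T y)) x) by (apply cont_clamp; [lra | getc Hcont]).
  assert (cpVENP : forall x, continuous (fun y => pVENP (clampT T y)) x) by (apply cont_clamp; [lra | getc Hcont]).
  assert (cQARS : forall x, continuous (fun y => QARS (clampT T y)) x) by (apply cont_clamp; [lra | getc Hcont]).
  assert (cQVENS : forall x, continuous (fun y => QVENS (clampT T y)) x) by (apply cont_clamp; [lra | getc Hcont]).
  assert (cQARP : forall x, continuous (fun y => QARP (clampT T y)) x) by (apply cont_clamp; [lra | getc Hcont]).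
  assert (cQVENP : forall x, continuous (fun y => QVENP (clampT T y)) x) by (apply cont_clamp; [lra | getc Hcont]).
  assert (cEaLA : forall x, continuous (fun y => EaLA (clampT T y)) x) by (apply cont_clamp; [lra | getc4 HEa]).
  assert (cEaLV : forall x, continuous (fun y => EaLV (clampT T y)) x) by (apply cont_clamp; [lra | getc4 HEa]).
  assert (cEaRA : forall x, continuous (fun y => EaRA (clampT T y)) x) by (apply cont_clamp; [lra | getc4 HEa]).
  assert (cEaRV : forall x, continuous (fun y => EaRV (clampT T y)) x) by (apply cont_clamp; [lra | getc4 HEa]).
  Ltac cont := repeat match goal with
     | |- continuous (fun y => ?c) _ => apply cont_const
     | Hh : forall x, continuous ?g x |- continuous ?g _ => apply Hh
     | |- continuous (fun y => @?f y + @?g y) ?x => apply (cont_plus f g x)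
     | |- continuous (fun y => @?f y - @?g y) ?x => apply (cont_minus f g x)
     | |- continuous (fun y => @?f y * @?g y) ?x => apply (cont_mult f g x)
     | |- continuous (fun y => - @?f y) ?x => apply (cont_opp f x)
     | |- continuous (fun y => @?f y ^ 2) ?x => apply (cont_pow2 f x)
     | |- continuous (fun y => valveQ ?a ?b (@?f y) (@?g y)) ?x => apply (cont_valveQ a b f g x); [assumption|assumption| |]
     | |- continuous (fun y => valvePi ?a ?b (@?f y) (@?g y)) ?x => apply (cont_valvePi a b f g x); [assumption|assumption| |]
     end.
  pose (hact := fun u : R => - (EaLA (clampT T u)) * (VLA (clampT T u) - V0LA) * (QVENP (clampT T u) - valveQ Rmin Rmax (chamberP pEX EpLA EaLA V0LA VLA (clampT T u)) (chamberP pEX EpLV EaLV V0LV VLV (clampT T u))) + - (EaLV (clampT T u)) * (VLV (clampT T u) - V0LV) * (valveQ Rmin Rmax (chamberP pEX EpLA EaLA V0LA VLA (clampT T u)) (chamberP pEX EpLV EaLV V0LV VLV (clampT T u)) - valveQ Rmin Rmax (chamberP pEX EpLV EaLV V0LV VLV (clampT T u)) (pARS (clampT T u))) + - (EaRA (clampT T u)) * (VRA (clampT T u) - V0RA) * (QVENS (clampT T u) - valveQ Rmin Rmax (chamberP pEX EpRA EaRA V0RA VRA (clampT T u)) (chamberP pEX EpRV EaRV V0RV VRV (clampT T u))) + - (EaRV (clampT T u)) * (VRV (clampT T u) - V0RV) * (valveQ Rmin Rmax (chamberP pEX EpRA EaRA V0RA VRA (clampT T u)) (chamberP pEX EpRV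 EaRV V0RV VRV (clampT T u)) - valveQ Rmin Rmax (chamberP pEX EpRV EaRV V0RV VRV (clampT T u)) (pARP (clampT T u)))).
  pose (hdiss := fun u : R => Pidiss (clampT T u)).
  assert (Kact : forall x, continuous hact x).
  { intros x. unfold hact, chamberP. cont. }
  assert (Kdiss : forall x, continuous hdiss x).
  { intros x. unfold hdiss, Pidiss. cbv beta zeta. unfold chamberP. cont. }
  assert (Iact : ex_RInt hact 0 T) by (apply exR; intros; apply Kact).
  assert (Idiss : ex_RInt hdiss 0 T) by (apply exR; intros; apply Kdiss).
  pose (H := fun u => hact u + hdiss u).
  assert (KH : forall x, continuous H x) by (intros; apply cont_plus; auto).
  assert (IH : forall a b, ex_RInt H a b) by (intros; apply exR; intros; apply KH).
  pose (En := fun u : R => EpLA/2 * ((VLA u - V0LA) * (VLA u - V0LA)) + EpLV/2 * ((VLV u - V0LV) * (VLV u - V0LV)) + EpRA/2 * ((VRA u - V0RA) * (VRA u - V0RA)) + EpRV/2 * ((VRV u - V0RV) * (VRV u - V0RV)) + pEX * VLA u + pEX * VLV u + pEX * VRA u + pEX * VRV u + CARS/2 * ((pARS u - 0) * (pARS u - 0)) + CVENS/2 * ((pVENS u - 0) * (pVENS u - 0)) + CARP/2 * ((pARP u - 0) * (pARP u - 0)) + CVENP/2 * ((pVENP u - 0) * (pVENP u - 0)) + LARS/2 * ((QARS u - 0) * (QARS u - 0)) + LVENS/2 * ((QVENS u - 0) * (QVENS u - 0)) + LARP/2 * ((QARP u - 0) * (QARP u - 0)) + LVENP/2 * ((QVENP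 u - 0) * (QVENP u - 0))).
  assert (dEn : forall t, 0 < t < T -> is_derive En t (H t)).
  { intros t Ht.
    assert (Ht' : 0 <= t <= T) by lra.
    destruct (Hder t Ht) as (d1&d2&d3&d4&d5&d6&d7&d8&d9&d10&d11&d12).
    pose proof (Hsys t Ht') as S. cbv zeta in S.
    destruct S as (e1&e2&e3&e4&e5&e6&e7&e8&e9&e10&e11&e12).
    assert (l9 := ind_eq _ _ _ _ _ HR1 e9).
    assert (l10 := ind_eq _ _ _ _ _ HR2 e10).
    assert (l11 := ind_eq _ _ _ _ _ HR3 e11).
    assert (l12 := ind_eq _ _ _ _ _ HR4 e12).
    pose proof (energy_identity pEX EpLA EpLV EpRA EpRV (EaLA t) (EaLV t) (EaRA t) (EaRV t) V0LA V0LV V0RA V0RV (VLA t) (VLV t) (VRA t) (VRV t) (dVLA t) (dVLV t) (dVRA t) (dVRV t) (chamberP pEX EpLA EaLA V0LA VLA t) (chamberP pEX EpLV EaLV V0LV VLV t) (chamberP pEX EpRA EaRA V0RA VRA t) (chamberP pEX EpRV EaRV V0RV VRV t) (pARS t) (pVENS t) (pARP t) (pVENP t) (dpARS t) (dpVENS t) (dpARP t) (dpVENP t) (QARS t) (QVENS t) (QARP t) (QVENP t) (dQARS t) (dQVENS t) (dQARP t) (dQVENP t) CARS CVENS CARP CVENP RARS RVENS RARP RVENP LARS LVENS LARP LVENP (valveQ Rmin Rmax (chamberP pEX EpLA EaLA V0LA VLA t) (chamberP pEX EpLV EaLV V0LV VLV t)) (valveQ Rmin Rmax (chamberP pEX EpLV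 EaLV V0LV VLV t) (pARS t)) (valveQ Rmin Rmax (chamberP pEX EpRA EaRA V0RA VRA t) (chamberP pEX EpRV EaRV V0RV VRV t)) (valveQ Rmin Rmax (chamberP pEX EpRV EaRV V0RV VRV t) (pARP t)) (valvePi Rmin Rmax (chamberP pEX EpLA EaLA V0LA VLA t) (chamberP pEX EpLV EaLV V0LV VLV t)) (valvePi Rmin Rmax (chamberP pEX EpLV EaLV V0LV VLV t) (pARS t)) (valvePi Rmin Rmax (chamberP pEX EpRA EaRA V0RA VRA t) (chamberP pEX EpRV EaRV V0RV VRV t)) (valvePi Rmin Rmax (chamberP pEX EpRV EaRV V0RV VRV t) (pARP t)) eq_refl eq_refl eq_refl eq_refl e1 e2 e3 e4 e5 e6 e7 e8 l9 l10 l11 l12 (valve_prod _ _ _ _ HRmin HRmax) (valve_prod _ _ _ _ HRmin HRmax) (valve_prod _ _ _ _ HRmin HRmax) (valve_prod _ _ _ _ HRmin HRmax)) as EI.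
    eapply is_derive_eq.
    { unfold En. repeat match goal with
     | |- is_derive (fun y => @?f y + @?g y) ?x _ => eapply (D_plus f g x)
     | |- is_derive (fun y => ?k * ((@?f y - ?c) * _)) ?x _ => eapply (D_sq f x _ k c)
     | |- is_derive (fun y => ?k * @?f y) ?x _ => eapply (D_lin f x _ k)
     end; eassumption. }
    assert (Hact : hact t = Piact t).
    { unfold hact. rewrite (clampT_id T t Ht'). unfold Piact. cbv beta. rewrite e1, e2, e3, e4. reflexivity. }
    assert (Hdiss : hdiss t = Pidiss t).
    { unfold hdiss. rewrite (clampT_id T t Ht'). reflexivity. }
    unfold H. rewrite Hact, Hdiss. unfold Piact, Pidiss. cbv beta zeta.
    etransitivity; [| exact EI]. field. }
  pose (G := fun u => RInt H 0 u).
  assert (dG : forall x, is_derive G x (H x)).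
  { intros x. apply (is_derive_RInt (V:=R_NormedModule) H G 0 x). apply filter_forall. intros b. apply RInt_correctR. apply IH. apply KH. }
  pose (Ec := fun u => En (clampT T u)).
  assert (KEc : forall x, continuous Ec x).
  { intros x. unfold Ec, En. cont. }
  pose (F := fun u => Ec u - G u).
  destruct (MVT_gen F 0 T (fun _ => 0)) as [cc [_ Hc]].
  { intros x Hx. apply mm0T in Hx; auto.
    assert (dEc : is_derive Ec x (H x)).
    { apply (is_derive_ext_loc En). 
      - apply (filter_imp (fun u => clampT T u = u)). intros u Hu. unfold Ec. rewrite Hu. reflexivity.
        apply locally_clamp. auto.
      - apply dEn; auto. }
    eapply is_derive_eq. apply D_minus. exact dEc. exact (dG x). ring. }
  { intros x _. apply continuity_pt_filterlim. change (continuous F x).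
    apply cont_minus. apply KEc. apply (ex_derive_continuous (V:=R_NormedModule) G x). exists (H x). apply dG. }
  assert (HG0 : G 0 = 0). { unfold G. rewrite RInt_pointR. reflexivity. }
  assert (HEc : Ec T = Ec 0).
  { unfold Ec. rewrite (clampT_id T T) by lra. rewrite (clampT_id T 0) by lra.
    destruct Hper as (p1&p2&p3&p4&p5&p6&p7&p8&p9&p10&p11&p12).
    unfold En. rewrite p1, p2, p3, p4, p5, p6, p7, p8, p9, p10, p11, p12. reflexivity. }
  assert (HGT : G T = 0).
  { unfold F in Hc. rewrite HG0, HEc in Hc. lra. }
  assert (HS : RInt H 0 T = RInt hact 0 T + RInt hdiss 0 T).
  { apply is_RInt_uniqueR. exact (is_RInt_plus hact hdiss 0 T _ _ (RInt_correctR _ _ _ Iact) (RInt_correctR _ _ _ Idiss)). }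
  exists (RInt hact 0 T), (RInt hdiss 0 T). split; [| split].
  - apply (is_RInt_ext hact).
    + intros x Hx. apply mm0T in Hx; auto.
      assert (Hx' : 0 <= x <= T) by lra.
      pose proof (Hsys x Hx') as S. cbv zeta in S.
      destruct S as (e1&e2&e3&e4&_).
      unfold hact. rewrite (clampT_id T x Hx'). unfold Piact. cbv beta. rewrite e1, e2, e3, e4. reflexivity.
    + apply RInt_correctR. exact Iact.
  - apply (is_RInt_ext hdiss).
    + intros x Hx. apply mm0T in Hx; auto.
      unfold hdiss. rewrite (clampT_id T x) by lra. reflexivity.
    + apply RInt_correctR. exact Idiss.
  - unfold G in HGT. lra.
Qed.
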